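(* Let $\mathcal{I}$ be the input model and let $\mathbf{P}$ (protocol) and $\mathbf{T}$ (task) be action models with proper partial epistemic frames. If there exists a guarded positive epistemic formula $\varphi$ such that $\mathcal{I}[\![\mathbf{T}]\!]\models\varphi$ but $\mathcal{I}[\![\mathbf{P}]\!]\not\models\varphi$, then the task $\mathbf{T}$ is not solvable by the protocol $\mathbf{P}$.
   Context: Agents $\mathsf{Ag}=\{0,\dots,n-1\}$, $n>1$; $\mathsf{Value}=\mathsf{Ag}$; atomic propositions $\mathsf{At}=\bigcup_a\mathsf{At}_a$ with $\mathsf{At}_a=\{\mathrm{input}_a^v\mid v\in\mathsf{Value}\}$; $\mathsf{At}_B=\bigcup_{a\in B}\mathsf{At}_a$. Epistemic formulas: $\varphi::=p\mid\neg\varphi\mid\varphi\wedge\varphi\mid\varphi\vee\varphi\mid K_a\varphi$. Let $\mathsf{false}=p\wedge\neg p$, $\mathrm{alive}(a)=\neg K_a\mathsf{false}$, $\mathrm{alive}(B)=\bigwedge_{a\in B}\mathrm{alive}(a)$. Guarded positive formulas: $\varphi::=(\mathrm{alive}(B)\Rightarrow\psi)\mid\varphi\wedge\varphi\mid\varphi\vee\varphi\mid K_a\varphi$ ($B\subseteq\mathsf{Ag}$), where $\psi$ is a propositional formula (built with $\neg,\wedge,\vee$) over atoms in $\mathsf{At}_B$. A partial epistemic model $\langle W,\sim,L\rangle$: $W$ nonempty finite, each $\sim_a$ a partial equivalence relation (symmetric, transitive), $L:W\to\mathcal{P}(\mathsf{At})$; $\mathrm{Alive}(w)=\{a\mid w\sim_a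 w\}$; $w\sim_A w'$ means $w\sim_a w'$ for all $a\in A$; proper means $w\ne w'$ implies $w\not\sim_a w'$ for some $a$. Satisfaction: $p$ true at $w$ iff $p\in L(w)$; Booleans as usual; $K_a\varphi$ true at $w$ iff $\varphi$ true at all $w'$ with $w\sim_aw'$; $\mathcal{M}\models\varphi$ means true at every world. Input model $\mathcal{I}$: worlds are the sets $X=\{(0,v_0),\dots,(n-1,v_{n-1})\}$ with $v_i\in\mathsf{Value}$; $X\sim_aY$ iff $X$ and $Y$ contain the same vertex of the form $(a,v)$; $L(X)=\{\mathrm{input}_a^v\mid (a,v)\in X\}$. An action model $\langle T,\sim,\mathsf{pre}\rangle$: a partial epistemic frame $\langle T,\sim\rangle$ plus $\mathsf{pre}$ mapping actions to formulas; $\mathrm{Alive}(t)=\{a\mid t\sim_at\}$. Partial product update $\mathcal{I}[\![\mathbf{A}]\!]$: with $\langle X\rangle_t=\{Y\mid X\sim^{\mathcal{I}}_{\mathrm{Alive}(t)}Y,\ \mathcal{I},Y\models\mathsf{pre}(t)\}$, worlds are $(\langle X\rangle_t,t)$ with $\mathrm{Alive}(t)\subseteq\mathrm{Alive}(X)$ and $\mathcal{I},X\models\mathsf{pre}(t)$; $(\langle X\rangle_t,t)\sim_a(\langle Y\rangle_s,s)$ iff $X\sim^{\mathcal{I}}_aY$ and $t\sim_as$; label $\bigcap_{X'\in\langle X\rangle_t}L(X')$. A morphism $f:\langle W,\sim,L\rangle\to\langle W',\sim',L'\rangle$ is a map $f:W\to\mathcal{P}(W')$ such that (i) $w\sim_a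 w'$ implies $u\sim'_au'$ for all $u\in f(w)$, $u'\in f(w')$; (ii) for each $w$ there is $w'\in f(w)$ with $f(w)=\{u\in W'\mid w'\sim'_{\mathrm{Alive}(w)}u\}$; (iii) for $w\in W$, $w'\in f(w)$: $L(w)\cap\mathsf{At}_{\mathrm{Alive}(w)}=L'(w')\cap\mathsf{At}_{\mathrm{Alive}(w)}$. The task $\mathbf{T}$ is solvable by $\mathbf{P}$ if there is a morphism $\delta:\mathcal{I}[\![\mathbf{P}]\!]\to\mathcal{I}[\![\mathbf{T}]\!]$ such that for every world $(E,p)$ of $\mathcal{I}[\![\mathbf{P}]\!]$ there is $(E',t)\in\delta((E,p))$ with $E\subseteq E'$. *)

(* Defs.v *)
From mathcomp Require Import all_boot.
Set Implicit Arguments. Unset Strict Implicit. Unset Printing Implicit Defensive.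

Section Defs.
Variable n : nat.

(* Agents = Values = 'I_n ; atom input_a^v is (Atom a v). *)
Inductive form : Type :=
| Atom of 'I_n & 'I_n
| Neg of form
| And of form & form
| Or of form & form
| K of 'I_n & form.

Definition falseF (a : 'I_n) : form := And (Atom a a) (Neg (Atom a a)).
Definition aliveF (a : 'I_n) : form := Neg (K a (falseF a)).
(* (alive(B) => psi), written as ~alive(b1) \/ ... \/ ~alive(bk) \/ psi *)
Definition guard_imp (B : {set 'I_n}) (psi : form) : form :=
  foldr (fun a acc => Or (Neg (aliveF a)) acc) psi (enum B).

Fixpoint prop_over (B : {set 'I_n}) (f : form) : bool :=
  match f with
  | Atom a _ => a \in B
  | Neg g => prop_over B g
  | And g h => prop_over B g && prop_over B h
  | Or g h => prop_over B g && prop_over B h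
  | K _ _ => false
  end.

Inductive guarded_pos : form -> Prop :=
| GP_imp B psi : prop_over B psi -> guarded_pos (guard_imp B psi)
| GP_and f g : guarded_pos f -> guarded_pos g -> guarded_pos (And f g)
| GP_or f g : guarded_pos f -> guarded_pos g -> guarded_pos (Or f g)
| GP_K a f : guarded_pos f -> guarded_pos (K a f).

Record pmodel : Type := PModel {
  mW : finType;
  mR : 'I_n -> rel mW;
  mL : mW -> 'I_n -> 'I_n -> bool (* mL w a v <-> input_a^v \in L(w) *) }.
Arguments mR : clear implicits.
Arguments mL : clear implicits.

Fixpoint sat (M : pmodel) (w : mW M) (f : form) {struct f} : bool :=
  match f with
  | Atom a v => mL M w a v
  | Neg g => ~~ sat w g
  | And g h => sat w g && sat w h
  | Or g h => sat w g || sat w h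
  | K a g => [forall w' : mW M, mR M a w w' ==> sat w' g]
  end.

Definition valid (M : pmodel) (f : form) : Prop := forall w : mW M, sat w f.

Definition Alive (M : pmodel) (w : mW M) : {set 'I_n} := [set a | mR M a w w].

(* input model: a world {(0,v0),...,(n-1,v_{n-1})} is the function a |-> v_a *)
Definition inW : finType := {ffun 'I_n -> 'I_n}.
Definition input_model : pmodel :=
  @PModel inW (fun a X Y => X a == Y a) (fun X a v => X a == v).

Record amodel : Type := AModel {
  aT : finType;
  aR : 'I_n -> rel aT;
  apre : aT -> form }.
Arguments aR : clear implicits.
Arguments apre : clear implicits.

Definition aAlive (A : amodel) (t : aT A) : {set 'I_n} := [set a | aR A a t t].

Definition partial_frame (A : amodel) : Prop :=
  forall a : 'I_n, symmetric (aR A a) /\ transitive (aR A a).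

Definition proper_frame (A : amodel) : Prop :=
  forall t t' : aT A, t != t' -> exists a, ~~ aR A a t t'.

Definition rel_on (M : pmodel) (B : {set 'I_n}) (w u : mW M) : bool :=
  [forall a in B, mR M a w u].

Definition block (A : amodel) (X : inW) (t : aT A) : {set inW} :=
  [set Y : inW | rel_on (M := input_model) (aAlive t) X Y && sat (M := input_model) Y (apre A t)].

Definition pu_is_world (A : amodel) (x : {set inW} * aT A) : bool :=
  [exists X : inW, [&& aAlive x.2 \subset Alive (M := input_model) X,
                      sat (M := input_model) X (apre A x.2) & x.1 == block X x.2]].

Definition pu_W (A : amodel) : finType := {x : {set inW} * aT A | pu_is_world x}.

Definition pu_R (A : amodel) (a : 'I_n) (x y : pu_W A) : bool :=
  [exists X : inW, [exists Y : inW,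
     [&& (val x).1 == block X (val x).2, (val y).1 == block Y (val y).2,
         X a == Y a & aR A a (val x).2 (val y).2]]].

Definition pu_L (A : amodel) (x : pu_W A) (a v : 'I_n) : bool :=
  [forall X in (val x).1, X a == v].

Definition product_update (A : amodel) : pmodel :=
  @PModel (pu_W A) (@pu_R A) (@pu_L A).

Definition is_morphism (M M' : pmodel) (f : mW M -> {set mW M'}) : Prop :=
  [/\ (forall (a : 'I_n) (w w' : mW M), mR M a w w' ->
         forall u u', u \in f w -> u' \in f w' -> mR M' a u u'),
      (forall w : mW M, exists2 w', w' \in f w &
         f w = [set u | rel_on (M := M') (Alive w) w' u]) &
      (forall (w : mW M) (w' : mW M'), w' \in f w ->
         forall a v, a \in Alive w -> mL M w a v = mL M' w' a v)].

Definition solvable (P T : amodel) : Prop :=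
  exists2 delta : mW (product_update P) -> {set mW (product_update T)},
    is_morphism delta &
    forall w : mW (product_update P),
      exists2 w' : mW (product_update T), w' \in delta w &
        (val w).1 \subset (val w').1.

End Defs.

(* Main.v *)
Require Import Defs.
From mathcomp Require Import all_boot.
Set Implicit Arguments. Unset Strict Implicit. Unset Printing Implicit Defensive.

Section Aux.
Variable n : nat.

Lemma sat_guard (M : pmodel n) (w : mW M) B psi :
  sat w (guard_imp B psi) =
  has (fun a => sat w (Neg (aliveF a))) (enum B) || sat w psi.
Proof. rewrite /guard_imp; elim: (enum B) => //= a s ->; by rewrite orbA. Qed.

Lemma sat_notalive (M : pmodel n) (w : mW M) a :
  sat w (Neg (aliveF a)) = [forall u, ~~ @mR _ M a w u].
Proof.
rewrite /= negbK; apply: eq_forallb => u; by rewrite andbN; case: (@mR _ M a w u).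
Qed.

Lemma prop_eq (M M' : pmodel n) (w : mW M) (w' : mW M') B psi :
  prop_over B psi -> (forall a v, a \in B -> @mL _ M w a v = @mL _ M' w' a v) ->
  sat w psi = sat w' psi.
Proof.
move=> Hp HL; elim: psi Hp => [a v|g IH|g IHg h IHh|g IHg h IHh|b g IH] /=.
- by move=> Ha; rewrite (HL a v Ha).
- by move=> /IH ->.
- by move=> /andP[/IHg -> /IHh ->].
- by move=> /andP[/IHg -> /IHh ->].
- by [].
Qed.

Lemma pos_pres (M M' : pmodel n) (f : mW M -> {set mW M'})
  (hM : forall a w u, @mR _ M a w u -> @mR _ M a w w) :
  is_morphism f -> forall phi, guarded_pos phi ->
  forall w w', w' \in f w -> sat w' phi -> sat w phi.
Proof.
case=> H1 H2 H3 phi; elim => {phi}.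
- move=> B psi Hp w w' Hw'; rewrite !sat_guard.
  case: (boolP [forall b in B, @mR _ M b w w]) => Hall.
  + have -> : has (fun a => sat w' (Neg (aliveF a))) (enum B) = false.
      apply/negbTE/hasPn => b; rewrite mem_enum => hb.
      rewrite sat_notalive negb_forall; apply/existsP; exists w'; rewrite negbK.
      apply: (H1 b w w) => //; exact: (implyP (forallP Hall b) hb).
    move=> /= Hpsi; apply/orP; right.
    rewrite (prop_eq (w' := w') Hp) // => a v ha; apply: H3 => //.
    by rewrite inE; exact: (implyP (forallP Hall a) ha).
  + move=> _; apply/orP; left.
    move: Hall; rewrite negb_forall => /existsP[b]; rewrite negb_imply => /andP[hb nb].
    apply/hasP; exists b; first by rewrite mem_enum.
    rewrite sat_notalive; apply/forallP => u; apply/negP => /hM; by rewrite (negbTE nb).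
- move=> f1 g _ IHf _ IHg w w' Hw' /= /andP[a b]; apply/andP; split.
  exact: IHf Hw' a. exact: IHg Hw' b.
- move=> f1 g _ IHf _ IHg w w' Hw' /= /orP[a|b]; apply/orP.
  left; exact: IHf Hw' a. right; exact: IHg Hw' b.
- move=> a g _ IH w w' Hw' /= /forallP Hall; apply/forallP => u; apply/implyP => Hwu.
  have [u' Hu' _] := H2 u.
  apply: (IH u u' Hu'); exact: (implyP (Hall u') (H1 _ _ _ Hwu _ _ Hw' Hu')).
Qed.

Lemma pu_refl (P : amodel n) : partial_frame P ->
  forall a (w u : mW (product_update P)), @mR _ (product_update P) a w u ->
  @mR _ (product_update P) a w w.
Proof.
move=> HP a w u /existsP[X] /existsP[Y] /and4P[hX hY hXY hR].
apply/existsP; exists X; apply/existsP; exists X; rewrite hX eqxx /=.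
have [Hs Ht] := HP a.
by apply: (Ht _ _ _ hR); rewrite Hs.
Qed.

End Aux.

Theorem theorem3p6 (n : nat) (Hn : 1 < n) (P T : amodel n) :
  partial_frame P -> proper_frame P ->
  partial_frame T -> proper_frame T ->
  (exists phi : form n, [/\ guarded_pos phi,
                            valid (product_update T) phi &
                            ~ valid (product_update P) phi]) ->
  ~ solvable P T.
Proof.
move=> HP _ _ _ [phi [Hg HT HnP]] [delta Hm Hex].
apply: HnP => w.
have [w' Hw' _] := Hex w.
exact: (pos_pres (pu_refl HP) Hm Hg Hw' (HT w')).
Qed.
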